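(* Let $h,l_1,l_2$ be integers and $g\ge 3$ an integer with $l_1-l_2\ge 2$. Put $Q=(l_2,h-l_2)$, $P=(l_1,h-l_1)$ and $R=(k,h-l_2)$ where $k=l_2+g$ (so $R$ lies on the line $X+Y=h+g$ and has the same $Y$-coordinate as $Q$). Then $${}_{Q}N_{P}^{R}=\binom{g-2}{k-l_1}.$$
   Context: Let $\Sigma=\{a,b\}$. A lattice path is a finite sequence of points of $\mathbb Z^2$ in which each consecutive difference is $(1,0)$ (an east step) or $(0,1)$ (a north step). The word $w(p)\in\Sigma^*$ of a lattice path $p$ records its steps in order, writing $a$ for an east step and $b$ for a north step; conversely, for a point $A\in\mathbb Z^2$ and a word $w$, $p_A(w)$ is the lattice path starting at $A$ whose word is $w$. For lattice paths $p,q$, $p\cap q$ denotes the set of lattice points lying on both. For distinct lattice points $A,B,C$, ${}_{A}\mathcal N_{B}^{C}$ is the set of triples $(p,q,p')$ where $p$ is a lattice path from $A$ to $C$, $q$ is a lattice path from $B$ to $C$, $p'=p_B(w(p))$, $p\cap q=\{C\}$ and $q\cap p'=\{B\}$; and ${}_{A}N_{B}^{C}=|{}_{A}\mathcal N_{B}^{C}|$. Binomial coefficients $\binom{N}{r}$ are $0$ when $r<0$ or $r>N$. *)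

(* Defs.v *)
From HB Require Import structures.
From mathcomp Require Import all_boot all_order all_algebra.
Set Implicit Arguments. Unset Strict Implicit. Unset Printing Implicit Defensive.
Import GRing.Theory Num.Theory.
Local Open Scope ring_scope.

Definition point := (int * int)%type.

Inductive letter := La | Lb.
Definition letter_eqb (x y : letter) : bool :=
  match x, y with La, La | Lb, Lb => true | _, _ => false end.
Lemma letter_eqP : Equality.axiom letter_eqb.
Proof. by case; case; constructor. Qed.
HB.instance Definition _ := hasDecEq.Build letter letter_eqP.

Definition east (u : point) : point := (u.1 + 1, u.2).
Definition north (u : point) : point := (u.1, u.2 + 1).
Definition lstep (u v : point) : bool := (v == east u) || (v == north u).

Definition is_lattice_path (p : seq point) : bool :=
  if p is x :: s then path lstep x s else false.

Definition lpath_from_to (A C : point) (p : seq point) : bool :=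
  [&& is_lattice_path p, head A p == A & last A p == C].

Definition word (p : seq point) : seq letter :=
  if p is x :: s then pairmap (fun u v => if v == east u then La else Lb) x s
  else [::].

Fixpoint path_of_word_rest (A : point) (w : seq letter) : seq point :=
  if w is c :: w' then
    let A' := if c is La then east A else north A in A' :: path_of_word_rest A' w'
  else [::].
Definition path_of_word (A : point) (w : seq letter) : seq point :=
  A :: path_of_word_rest A w.

Definition meet_only (p q : seq point) (C : point) : Prop :=
  forall x : point, (x \in p) && (x \in q) = (x == C).

Definition in_NABC (A B C : point) (t : seq point * seq point * seq point) : Prop :=
  let: (p, q, p') := t in
  [/\ lpath_from_to A C p, lpath_from_to B C q,
      p' = path_of_word B (word p), meet_only p q C & meet_only q p' B].

Definition has_card (T : eqType) (S : T -> Prop) (n : nat) : Prop :=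
  exists s : seq T, [/\ uniq s, forall x, S x <-> x \in s & size s = n].

Definition N_count (A B C : point) (n : nat) : Prop :=
  has_card (in_NABC A B C) n.

(* binomial coefficient on integers, 0 when r < 0 or r > N *)
Definition binz (N r : int) : nat :=
  match N, r with Posz n, Posz m => 'C(n, m) | _, _ => 0%N end.

(* Main.v *)
Require Import Defs.
From HB Require Import structures.
From mathcomp Require Import all_boot all_order all_algebra zify.
Import Order.TTheory GRing.Theory Num.Theory.
Set Implicit Arguments. Unset Strict Implicit.
Local Open Scope ring_scope.

Definition nA (w : seq letter) : nat := count (pred1 La) w.
Definition nB (w : seq letter) : nat := count (pred1 Lb) w.
Lemma nA_nil : nA [::] = 0%N. Proof. by []. Qed.
Lemma nB_nil : nB [::] = 0%N. Proof. by []. Qed.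
Lemma nA_cons c w : nA (c :: w) = ((c == La) + nA w)%N. Proof. by []. Qed.
Lemma nB_cons c w : nB (c :: w) = ((c == Lb) + nB w)%N. Proof. by []. Qed.
Lemma nA_cat w w' : nA (w ++ w') = (nA w + nA w')%N. Proof. exact: count_cat. Qed.
Lemma nB_cat w w' : nB (w ++ w') = (nB w + nB w')%N. Proof. exact: count_cat. Qed.
Lemma nA_nseq n : nA (nseq n La) = n. Proof. by rewrite /nA count_nseq /= mul1n. Qed.

Lemma pow_cons A c w : path_of_word A (c :: w) =
  A :: path_of_word (if c is La then east A else north A) w.
Proof. by []. Qed.

Lemma pow_last A w : last A (path_of_word A w) =
  (A.1 + (nA w)%:Z, A.2 + (nB w)%:Z).
Proof.
elim: w A => [|c w IH] [a1 a2] /=; first by rewrite !addr0.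
case: c; [move: (IH (east (a1,a2)))|move: (IH (north (a1,a2)))]; rewrite /= => ->; rewrite /east /north /=;
  congr (_, _); lia.
Qed.

Lemma pow_lattice A w : is_lattice_path (path_of_word A w).
Proof.
rewrite /=; elim: w A => [|c w IH] A //=.
apply/andP; split; last exact: IH.
by case: c; rewrite /lstep eqxx ?orbT.
Qed.

Lemma east_north A : (north A == east A) = false.
Proof. case: A => a b; rewrite /north /east /= xpair_eqE; apply/negbTE/negP => /andP[/eqP H _]; lia. Qed.

Lemma word_pow A w : word (path_of_word A w) = w.
Proof.
elim: w A => [|c w IH] A //=.
have := IH (if c is La then east A else north A); rewrite /word /= => ->.
by case: c; rewrite ?eqxx ?east_north.
Qed.

Lemma lattice_pow x s : path lstep x s -> x :: s = path_of_word x (word (x :: s)).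
Proof.
elim: s x => [|y s IH] x //= /andP[Hxy Hp].
have := IH y Hp; rewrite /word /= => E.
case: ifP => [/eqP Hy|Hy] /=.
  by rewrite pow_cons -Hy -E.
move: Hxy; rewrite /lstep Hy /= => /eqP Hn.
by rewrite pow_cons -Hn -E.
Qed.

Lemma pow_bounds A w x : x \in path_of_word A w ->
  [/\ A.1 <= x.1, x.1 <= A.1 + (nA w)%:Z, A.2 <= x.2 & x.2 <= A.2 + (nB w)%:Z].
Proof.
elim: w A => [|c w IH] [a1 a2].
  by rewrite /= inE => /eqP ->; rewrite /= !addr0 !lexx.
rewrite pow_cons inE => /orP[/eqP -> /=|].
  split; lia.
case: c => /IH /= [] H1 H2 H3 H4; split; lia.
Qed.

Lemma pow_cat A w w' : path_of_word A (w ++ w') =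
  path_of_word A w ++ path_of_word_rest (last A (path_of_word A w)) w'.
Proof.
elim: w A => [|c w IH] A //=.
have := IH (if c is La then east A else north A); rewrite /path_of_word /= => ->.
by [].
Qed.

Lemma nseq_mem n A x : x \in path_of_word A (nseq n La) =
  [&& x.2 == A.2, A.1 <= x.1 & x.1 <= A.1 + n%:Z].
Proof.
case: x => x1 x2 /=.
elim: n A => [|n IH] [a1 a2].
  rewrite /= inE xpair_eqE.
  apply/idP/idP => [/andP[/eqP -> /eqP ->]|/andP[/eqP -> H]]; rewrite ?eqxx ?addr0 ?lexx //.
  rewrite andbT; apply/eqP; lia.
rewrite [nseq _ _]/= pow_cons inE IH /= xpair_eqE.
apply/idP/idP.
  move=> /orP[/andP[/eqP -> /eqP ->]|/and3P[/eqP -> H1 H2]]; rewrite eqxx /=;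
    apply/andP; split; lia.
move=> /and3P[/eqP -> H1 H2]; rewrite eqxx /= andbT.
case: (x1 =P a1) => [//|Hne]; apply/andP; split; lia.
Qed.

Lemma nB0 w : nB w = 0%N -> w = nseq (nA w) La.
Proof.
elim: w => [|c w IH] //=; case: c => /= H.
  by rewrite add0n in H *; rewrite -IH.
exfalso; move: H; simpl; lia.
Qed.
Fixpoint wordsn (n a : nat) : seq (seq letter) :=
  match n with
  | 0 => if a == 0 then [:: [::]] else [::]
  | n'.+1 => map (cons La) (if a is a'.+1 then wordsn n' a' else [::])
             ++ map (cons Lb) (wordsn n' a)
  end.

Lemma size_wordsn n a : size (wordsn n a) = 'C(n, a).
Proof.
elim: n a => [|n IH] [|a] //=; rewrite ?size_cat !size_map ?IH //.
  by rewrite !bin0.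
by rewrite binS addnC.
Qed.

Lemma mem_wordsn n a w : (w \in wordsn n a) = (size w == n) && (count (pred1 La) w == a).
Proof.
elim: n a w => [|n IH] a w /=.
  case: w => [|c w] /=; case: a => //=; rewrite ?inE //.
rewrite mem_cat; case: w => [|c w] /=.
  by apply/negbTE/negP => /orP[] /mapP[? _].
have Hm : forall (c0 : letter) (s : seq (seq letter)), (c :: w \in map (cons c0) s) = (c == c0) && (w \in s).
  move=> c0 s; apply/mapP/andP => [[w' H [-> ->]]|[/eqP -> H]]; last by exists w.
  by rewrite eqxx.
rewrite !Hm eqSS; clear Hm; case: c; case: a => [|a] /=; rewrite ?IH ?in_nil /=; try lia.
Qed.

Lemma uniq_wordsn n a : uniq (wordsn n a).
Proof.
elim: n a => [|n IH] [|a] //=; rewrite ?cat_uniq ?map_inj_uniq ?IH //=;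
  try (by move=> x y []).
rewrite andbT; apply/hasPn => w /mapP[w' _ ->]; apply/negP => /mapP[? _ []] //.
Qed.
Lemma lpath_pow A C p : lpath_from_to A C p ->
  p = path_of_word A (word p) /\ (A.1 + (nA (word p))%:Z, A.2 + (nB (word p))%:Z) = C.
Proof.
case: p => [|x s] /and3P[] //= Hp /eqP Hx /eqP Hl.
subst x; have E := lattice_pow Hp; split=> //.
by rewrite -pow_last -E.
Qed.

Lemma mid_mem A w x : x \in path_of_word A (Lb :: w ++ [:: Lb]) ->
  [\/ x = A, x = (A.1 + (nA w)%:Z, A.2 + (nB w)%:Z + 2) |
     A.2 + 1 <= x.2 <= A.2 + 1 + (nB w)%:Z].
Proof.
rewrite pow_cons pow_cat inE mem_cat => /orP[/eqP ->|/orP[]]; first by constructor 1.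
  case/pow_bounds => _ _ H1 H2; constructor 3; rewrite /north /= in H1 H2.
  by apply/andP; split.
rewrite pow_last /= inE => /eqP ->; constructor 2; rewrite /north /=.
by congr pair; lia.
Qed.

Lemma last_mem A w : last A (path_of_word A w) \in path_of_word A w.
Proof. rewrite /path_of_word /=; exact: mem_last. Qed.

Lemma head_mem A w : A \in path_of_word A w.
Proof. by rewrite /path_of_word mem_head. Qed.

Lemma count_lb w : nB (Lb :: w ++ [:: Lb]) = (nB w + 2)%N.
Proof. rewrite nB_cons nB_cat nB_cons nB_nil /=; lia. Qed.
Lemma count_la w : nA (Lb :: w ++ [:: Lb]) = nA w.
Proof. rewrite nA_cons nA_cat nA_cons nA_nil /=; lia. Qed.

Lemma nB_nseq n : nB (nseq n La) = 0%N.
Proof. by elim: n. Qed.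

Lemma lpath_intro A C w : (A.1 + (nA w)%:Z, A.2 + (nB w)%:Z) = C ->
  lpath_from_to A C (path_of_word A w).
Proof. move=> <-; by rewrite /lpath_from_to pow_lattice pow_last eqxx /= eqxx. Qed.

Lemma charac (h l1 l2 : int) (gn : nat) t : (3 <= gn)%N -> 2 <= l1 - l2 ->
 in_NABC (l2, h-l2) (l1, h-l1) (l2 + gn%:Z, h - l2) t <->
 exists w, [/\ (nA w)%:Z = l2 + gn%:Z - l1, (nB w)%:Z = l1 - l2 - 2 &
   t = (path_of_word (l2,h-l2) (nseq gn La),
        path_of_word (l1,h-l1) (Lb :: w ++ [::Lb]),
        path_of_word (l1,h-l1) (nseq gn La))].
Proof.
move=> Hg Hl; split.
  case: t => [[p q] p'] [Hp Hq -> M1 M2].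
  case: (lpath_pow Hp) => Ep /= [HpA HpB].
  have Hwp : word p = nseq gn La.
    rewrite (nB0 (w := word p)); last by lia.
    by congr nseq; lia.

  rewrite Hwp in Ep M2 *; clear Hwp HpA HpB Hp; subst p.
  case: (lpath_pow Hq) => Eq /= [HqA HqB]; clear Hq.
  move: (word q) Eq HqA HqB => wq Eq HqA HqB; subst q.
  move: M1 M2 HqA HqB.
  case: wq => [|c w1] M1 M2 HqA HqB; first by exfalso; move: HqB => /=; lia.
  case: c M1 M2 HqA HqB => M1 M2 HqA HqB.
    exfalso; have := M2 (east (l1, h - l1)).
    rewrite pow_cons inE (head_mem _ _) orbT nseq_mem /= eqxx /=.
    have -> : (l1 + 1 <= l1 + gn%:Z) by lia.
    have -> : (l1 <= l1 + 1) by lia.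
    rewrite /= xpair_eqE => /esym/andP[/eqP H _]; simpl in H; lia.
  case/lastP: w1 M1 M2 HqA HqB => [|w d] M1 M2 HqA HqB.
    exfalso; move: HqB => /=; lia.
  move: M1 M2 HqA HqB; rewrite -cats1 -cat_cons.
  case: d => M1 M2 HqA HqB.
    exfalso; have := M1 (last (l1, h - l1) (path_of_word (l1, h - l1) (Lb :: w))).
    rewrite pow_cat mem_cat last_mem orTb andbT pow_last nseq_mem xpair_eqE /=.
    rewrite !(nA_cons, nB_cons, nA_cat, nB_cat, nA_nil, nB_nil) /= in HqA HqB *.
    have -> : h - l1 + (1 + nB w)%N%:Z == h - l2 by apply/eqP; lia.
    have -> : l2 <= l1 + (0 + nA w)%N%:Z by lia.
    have -> : l1 + (0 + nA w)%N%:Z <= l2 + gn%:Z by lia.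
    have -> : (l1 + (0 + nA w)%N%:Z == l2 + gn%:Z) = false by apply/negbTE/eqP; lia.
    by [].
  exists w; rewrite !(nA_cons, nB_cons, nA_cat, nB_cat, nA_nil, nB_nil) /= in HqA HqB; split=> //; lia.
case=> w [HA HB ->].
split.
- by apply: lpath_intro; rewrite nA_nseq nB_nseq /=; congr pair; lia.
- by apply: lpath_intro; rewrite count_la count_lb /=; congr pair; lia.
- by rewrite word_pow.
- move=> [x1 x2]; case: ((x1, x2) =P (l2 + gn%:Z, h - l2)) => [->|Hne].
    rewrite nseq_mem /= eqxx /=.
    have -> : l2 <= l2 + gn%:Z by lia.
    rewrite lexx /=.
    have E : (l2 + gn%:Z, h - l2) = last (l1, h - l1) (path_of_word (l1, h - l1) (Lb :: w ++ [:: Lb])).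
      by rewrite pow_last count_la count_lb /=; congr pair; lia.
    by rewrite E last_mem.
  apply/negbTE/negP => /andP[]; rewrite nseq_mem /= => /and3P[/eqP H1 H2 H3].
  case/mid_mem => [[_ E]|E|/andP[/= H4 H5]]; try lia.
  by apply: Hne; rewrite E /=; congr pair; lia.
- move=> [x1 x2]; case: ((x1, x2) =P (l1, h - l1)) => [->|Hne].
    by rewrite !head_mem.
  apply/negbTE/negP => /andP[]; case/mid_mem => [E|E|/andP[/= H4 H5]].
  + by rewrite E in Hne.
  + case: E => _ ->; rewrite nseq_mem /= => /and3P[/eqP H _ _]; lia.
  + rewrite nseq_mem /= => /and3P[/eqP H _ _]; lia.
Qed.

Lemma size_nAB w : size w = (nA w + nB w)%N.
Proof.
elim: w => [|c w IH] //; rewrite nA_cons nB_cons /= IH; case: c => /=; lia.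
Qed.

Theorem mainTheorem7 (h l1 l2 g : int) :
  3 <= g -> 2 <= l1 - l2 ->
  let k := l2 + g in
  let Q : point := (l2, h - l2) in
  let P : point := (l1, h - l1) in
  let R : point := (k, h - l2) in
  N_count Q P R (binz (g - 2) (k - l1)).
Proof.
move=> Hg Hl k Q P R; rewrite {}/R {}/k {}/Q {}/P.
case: g Hg => gn Hg; last by exfalso; lia.
have Hg' : (3 <= gn)%N by lia.
have -> : (gn%:Z - 2) = (gn - 2)%N%:Z by lia.
case Ea: (l2 + gn%:Z - l1) => [a|a].
- exists [seq (path_of_word (l2, h - l2) (nseq gn La),
               path_of_word (l1, h - l1) (Lb :: w ++ [::Lb]),
               path_of_word (l1, h - l1) (nseq gn La)) | w <- wordsn (gn - 2) a].
  split.
  + rewrite map_inj_uniq ?uniq_wordsn // => w w' /(congr1 (fun t => word t.1.2)).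
    by rewrite !word_pow => [[]]; rewrite !cats1; apply: rcons_injl.
  + move=> t; rewrite charac //; split.
      move=> [w [HA HB ->]]; apply/mapP; exists w => //.
      rewrite mem_wordsn size_nAB; apply/andP; split; apply/eqP; first lia.
      change (nA w = a); lia.
    move=> /mapP[w Hw ->]; exists w; split=> //;
      move: Hw; rewrite mem_wordsn size_nAB => /andP[/eqP H1 /eqP H2]; change (nA w = a) in H2; lia.
  + by rewrite size_map size_wordsn.
- exists [::]; split=> // t; rewrite charac //; split=> //.
  move=> [w [HA _ _]]; lia.
Qed.
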